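(* For each $i\in\{1,2,3,4\}$ and any right-hand side, GMRES applied (in exact arithmetic) to the preconditioned system $\mathcal{M}_i^{-1}\mathcal{A}\mathbf{x}=\mathcal{M}_i^{-1}\tilde b$ terminates with the exact solution in at most $n+q+1$ iterations.
   Context: Let $A_1\in\mathbb{R}^{p\times n}$ have full column rank and $A_2\in\mathbb{R}^{q\times n}$; let $b_1\in\mathbb{R}^p$, $b_2\in\mathbb{R}^q$. Set $P=A_1^TA_1$, assume $P-A_2^TA_2$ is symmetric positive definite (so $\mathcal{A}$ below is nonsingular), and let $\hat P\in\mathbb{R}^{n\times n}$ be symmetric positive definite. Define $\mathcal{A}=\begin{pmatrix}I_p&A_1&0\\0&P&A_2^T\\0&A_2&I_q\end{pmatrix}$, $\tilde b=(b_1;A_1^Tb_1;b_2)$, $\mathcal{M}_1=\begin{pmatrix}I_p&0&0\\0&\hat P&0\\0&0&I_q\end{pmatrix}$, $\mathcal{M}_2=\begin{pmatrix}I_p&0&0\\0&\hat P&A_2^T\\0&0&I_q\end{pmatrix}$, $\mathcal{M}_3=\begin{pmatrix}I_p&A_1&0\\0&\hat P&0\\0&0&I_q\end{pmatrix}$, $\mathcal{M}_4=\begin{pmatrix}I_p&A_1&0\\0&\hat P&A_2^T\\0&0&I_q\end{pmatrix}$. *)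

(* Defs.v *)
From HB Require Import structures.
From mathcomp Require Import all_boot all_order all_algebra.
Set Implicit Arguments. Unset Strict Implicit. Unset Printing Implicit Defensive.
Import Order.TTheory GRing.Theory Num.Theory.
Local Open Scope ring_scope.

Definition spd (R : realFieldType) (m : nat) (M : 'M[R]_m) : Prop :=
  M^T = M /\ forall x : 'cV[R]_m, x != 0 -> 0 < (x^T *m M *m x) 0 0.

Definition calA (R : realFieldType) (p n q : nat)
  (A1 : 'M[R]_(p, n)) (A2 : 'M[R]_(q, n)) : 'M[R]_(p + (n + q)) :=
  block_mx 1%:M (row_mx A1 0) 0 (block_mx (A1^T *m A1) A2^T A2 1%:M).

Definition btilde (R : realFieldType) (p n q : nat)
  (A1 : 'M[R]_(p, n)) (b1 : 'cV[R]_p) (b2 : 'cV[R]_q) : 'cV[R]_(p + (n + q)) :=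
  col_mx b1 (col_mx (A1^T *m b1) b2).

Definition calM (R : realFieldType) (p n q : nat)
  (A1 : 'M[R]_(p, n)) (A2 : 'M[R]_(q, n)) (Ph : 'M[R]_n) (i : nat)
  : 'M[R]_(p + (n + q)) :=
  match i with
  | 1 => block_mx 1%:M 0 0 (block_mx Ph 0 0 1%:M)
  | 2 => block_mx 1%:M 0 0 (block_mx Ph A2^T 0 1%:M)
  | 3 => block_mx 1%:M (row_mx A1 0) 0 (block_mx Ph 0 0 1%:M)
  | _ => block_mx 1%:M (row_mx A1 0) 0 (block_mx Ph A2^T 0 1%:M)
  end.

Definition krylov_vec (R : ringType) (m : nat) (T : 'M[R]_m) (r : 'cV[R]_m)
  (j : nat) : 'cV[R]_m := iter j (mulmx T) r.

(* The k-th GMRES iterate for T x = c with initial guess x0 minimizes the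
   residual 2-norm over x0 + K_k(T, r0), r0 = c - T x0.  It is the exact
   solution iff the minimal residual is zero, i.e. iff some element of
   x0 + K_k(T, r0) solves the system exactly. *)
Definition gmres_exact_at (R : realFieldType) (m : nat) (T : 'M[R]_m)
  (c x0 : 'cV[R]_m) (k : nat) : Prop :=
  exists a : 'I_k -> R,
    T *m (x0 + \sum_(j < k) a j *: krylov_vec T (c - T *m x0) j) = c.

(* Main.v *)
Require Import Defs.
From HB Require Import structures.
From mathcomp Require Import all_boot all_order all_algebra.
Import Order.TTheory GRing.Theory Num.Theory.
Local Open Scope ring_scope.

Section L.
Variable R : realFieldType.

Lemma gmres_from_annih (k d : nat) (T : 'M[R]_k) c x0 (g : nat -> R) :
  g 0%N != 0 ->
  \sum_(i < d.+1) g i *: krylov_vec T (c - T *m x0) i = 0 ->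
  gmres_exact_at T c x0 d.
Proof.
move=> g0 H; set r := c - T *m x0 in H.
rewrite big_ord_recl /= in H.
exists (fun j : 'I_d => - (g (j.+1) / g 0%N)).
rewrite mulmxDr mulmx_sumr.
under eq_bigr do rewrite -scalemxAr.
have -> : \sum_(i < d) - (g i.+1 / g 0%N) *: (T *m krylov_vec T r i)
   = - (g 0%N)^-1 *: \sum_(i < d) g (lift ord0 i) *: krylov_vec T r (lift ord0 i).
  rewrite scaler_sumr; apply: eq_bigr => i _.
  by rewrite scalerA /= mulrC mulNr.
have -> : \sum_(i < d) g (lift ord0 i) *: krylov_vec T r (lift ord0 i)
   = - (g 0%N *: krylov_vec T r 0).
  by apply/eqP; rewrite -subr_eq0 opprK addrC H.
rewrite /= scalerN scaleNr opprK scalerA mulVf // scale1r /r.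
by rewrite addrC subrK.
Qed.

Lemma vec_CH (N : nat) (S : 'M[R]_N) (w : 'cV[R]_N) :
  \sum_(i < N.+1) (char_poly S)`_i *: krylov_vec S w i = 0.
Proof.
case: N S w => [|N] S w; first by rewrite flatmx0.
have CH := Cayley_Hamilton S.
have E : forall i, krylov_vec S w i = S ^+ i *m w.
  elim=> [|i IH]; first by rewrite expr0 mul1mx.
  by rewrite /= -/(krylov_vec S w i) IH exprS mulmxA.
under eq_bigr do rewrite E scalemxAl.
rewrite -mulmx_suml.
suff -> : \sum_(i < N.+2) (char_poly S)`_i *: S ^+ i = horner_mx S (char_poly S).
  by rewrite CH mul0mx.
rewrite /horner_mx /horner_morph horner_coef size_map_poly size_char_poly.
by apply: eq_bigr => i _; rewrite coef_map /= -mulmxE mul_scalar_mx.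
Qed.


Lemma krylov_S (k : nat) (T : 'M[R]_k) v i :
  krylov_vec T v i.+1 = T *m krylov_vec T v i.
Proof. by []. Qed.

Lemma block_annih (m N : nat) (X : 'M[R]_(m, N)) (S : 'M[R]_N)
  (v : 'cV[R]_(m + N)) (f : {poly R}) :
  (size f <= N.+1)%N ->
  \sum_(i < N.+1) f`_i *: krylov_vec S (dsubmx v) i = 0 ->
  \sum_(i < N.+2) (f * 'X - f)`_i *: krylov_vec (block_mx 1%:M X 0 S) v i = 0.
Proof.
move=> sf Hf; set T := block_mx 1%:M X 0 S.
have D : forall i, dsubmx (krylov_vec T v i) = krylov_vec S (dsubmx v) i.
  elim=> [|i IH] //; rewrite krylov_S krylov_S -IH.
  rewrite -{1}(vsubmxK (krylov_vec T v i)) /T mul_block_col.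
  by rewrite col_mxKd mul0mx add0r.
set u := \sum_(i < N.+1) f`_i *: krylov_vec T v i.
have du : dsubmx u = 0.
  rewrite /u linear_sum /=; apply: etrans Hf; apply: eq_bigr => i _.
  by rewrite linearZ /= D.
have E1 : \sum_(i < N.+2) (f * 'X)`_i *: krylov_vec T v i = T *m u.
  rewrite big_ord_recl coefMX eqxx scale0r /u mulmx_sumr.
  rewrite [X in _ + X = _](_ : _ = \sum_(i < N.+1) T *m (f`_i *: krylov_vec T v i)).
    exact: add0r.
  by apply: eq_bigr => i _; rewrite coefMX /= -scalemxAr.
have E2 : \sum_(i < N.+2) f`_i *: krylov_vec T v i = u.
  by rewrite big_ord_recr /= (nth_default 0 sf) scale0r addr0.
under eq_bigr do rewrite coefB scalerBl.
rewrite sumrB E1 E2.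
rewrite -(vsubmxK u) du /T mul_block_col !mulmx0 mul1mx mul0mx !addr0.
by rewrite subrr.
Qed.


Lemma spd_det (k : nat) (Q : 'M[R]_k) : spd Q -> \det Q != 0.
Proof.
move=> [_ H]; apply/negP => /det0P [v nz vQ].
have nzt : v^T != 0.
  by apply: contra nz => /eqP h; rewrite -(trmxK v) h trmx0.
have := H _ nzt; rewrite trmxK vQ mul0mx mxE ltxx //.
Qed.

Lemma struct_T (m N : nat) (B : 'M[R]_(m, N)) (D : 'M[R]_N) (E : 'M[R]_(m, N))
  (F : 'M[R]_N) (T : 'M[R]_(m + N)) :
  \det D != 0 -> block_mx 1%:M B 0 D *m T = block_mx 1%:M E 0 F ->
  T = block_mx 1%:M (ursubmx T) 0 (drsubmx T).
Proof.
move=> dD; rewrite -{1}[T]submxK mulmx_block => /eq_block_mx [h1 _ h3 _].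
rewrite !mul0mx !add0r in h3.
have Dl : dlsubmx T = 0.
  have uD : D \in unitmx by rewrite unitmxE unitfE.
  by rewrite -(mulKmx uD (dlsubmx T)) h3 mulmx0.
rewrite Dl mulmx0 addr0 mul1mx in h1.
by rewrite -{1}[T]submxK h1 Dl.
Qed.

Lemma detA_ne0 (p n q : nat) (A1 : 'M[R]_(p, n)) (A2 : 'M[R]_(q, n)) :
  spd (A1^T *m A1 - A2^T *m A2) -> \det (calA A1 A2) != 0.
Proof.
move=> /spd_det H; rewrite /calA det_ublock det1 mul1r.
have -> : block_mx (A1^T *m A1) A2^T A2 1%:M =
   block_mx 1%:M A2^T 0 1%:M *m block_mx (A1^T *m A1 - A2^T *m A2) 0 A2 1%:M.
  rewrite mulmx_block !mul1mx !mul0mx !mulmx1 !add0r.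
  by rewrite subrK.
by rewrite det_mulmx det_ublock det_lblock !det1 !mul1r mulr1.
Qed.

Lemma main_gen (p n q : nat) (A1 : 'M[R]_(p, n)) (A2 : 'M[R]_(q, n))
  (b1 : 'cV[R]_p) (b2 : 'cV[R]_q) (x0 : 'cV[R]_(p + (n + q)))
  (Bm : 'M[R]_(p, n + q)) (D : 'M[R]_(n + q)) :
  spd (A1^T *m A1 - A2^T *m A2) -> \det D != 0 ->
  let M := block_mx 1%:M Bm 0 D in
  gmres_exact_at (invmx M *m calA A1 A2) (invmx M *m btilde A1 b1 b2) x0 (n + q).+1.
Proof.
move=> hA dD M.
have uM : M \in unitmx by rewrite unitmxE unitfE /M det_ublock det1 mul1r.
set T := invmx M *m calA A1 A2.
have MT : M *m T = calA A1 A2 by rewrite /T mulKVmx.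
have ET := @struct_T _ _ _ _ _ _ T dD MT.
have dT : \det T != 0.
  rewrite /T det_mulmx det_inv mulf_neq0 //; last exact: detA_ne0.
  by rewrite invr_eq0 -unitfE -unitmxE.
have dS : \det (drsubmx T) != 0.
  by move: dT; rewrite {1}ET det_ublock det1 mul1r.
apply: (@gmres_from_annih _ _ _ _ _ (fun i => (char_poly (drsubmx T) * 'X - char_poly (drsubmx T))`_i)).
  rewrite coefB coefMX eqxx sub0r oppr_eq0 char_poly_det mulf_neq0 //.
  by rewrite signr_eq0.
rewrite [X in krylov_vec X]ET.
apply: block_annih; first by rewrite size_char_poly.
exact: vec_CH.
Qed.

End L.

Theorem corollary2 (R : realFieldType) (p n q : nat)
  (A1 : 'M[R]_(p, n)) (A2 : 'M[R]_(q, n)) (Ph : 'M[R]_n)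
  (b1 : 'cV[R]_p) (b2 : 'cV[R]_q) (x0 : 'cV[R]_(p + (n + q))) (i : nat) :
  \rank A1 = n ->
  spd (A1^T *m A1 - A2^T *m A2) ->
  spd Ph ->
  (1 <= i <= 4)%N ->
  let M := calM A1 A2 Ph i in
  exists k : nat, (k <= n + q + 1)%N /\
    gmres_exact_at (invmx M *m calA A1 A2) (invmx M *m btilde A1 b1 b2) x0 k.
Proof.
move=> _ hA /spd_det dP hi M; exists (n + q).+1; split; first by rewrite addn1.
have d1 : \det (block_mx Ph 0 0 1%:M : 'M[R]_(n + q)) != 0.
  by rewrite det_ublock det1 mulr1.
have d2 : \det (block_mx Ph A2^T 0 1%:M : 'M[R]_(n + q)) != 0.
  by rewrite det_ublock det1 mulr1.
rewrite {}/M; move: hi; rewrite /calM.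
case: i => [|[|[|[|[|i]]]]] // _.
- exact: main_gen.
- exact: main_gen.
- exact: main_gen.
- exact: main_gen.
Qed.
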